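(* Let $G=(V,E)$ be a graph, $c\ge1$, $\epsilon\in[0,1/3)$, let $\kappa(G)=(V,\kappa(E))$ be an $(\epsilon,c)$-kernel of $G$ with tight nodes $\kappa_T(V)$, and let $M$ be a matching in $\kappa(G)$ such that every augmenting path in $\kappa(G)$ with respect to $M$ has length at least five. Let $F_T$ be the set of tight nodes unmatched in $M$. Then for every edge $(u,v)\in M$, $$\big|(\kappa(\mathcal N_u)\cap F_T)\cup(\kappa(\mathcal N_v)\cap F_T)\big|\le(1+\epsilon)c.$$
   Context: Let $\mathcal N_v$ denote the set of neighbors of $v$ in $G$. A subgraph $\kappa(G)=(V,\kappa(E))$ with $\kappa(E)\subseteq E$ is given, together with a partition of $V$ into tight nodes $\kappa_T(V)$ and slack nodes $\kappa_S(V)$. For $v\in V$ let $\kappa(\mathcal N_v)=\{u\in\mathcal N_v:(u,v)\in\kappa(E)\}$ (the friends of $v$). For $c\ge1$ and $\epsilon\in[0,1/3)$, $\kappa(G)$ is an $(\epsilon,c)$-kernel of $G$ (w.r.t. this partition) iff: (i) $|\kappa(\mathcal N_v)|\le(1+\epsilon)c$ for all $v\in V$; (ii) $|\kappa(\mathcal N_v)|\ge(1-\epsilon)c$ for all $v\in\kappa_T(V)$; (iii) for all $u,v\in\kappa_S(V)$, if $(u,v)\in E$ then $(u,v)\in\kappa(E)$. Given a matching $M$ in a graph $H$, an augmenting path of length $2k+1$ ($k \ge 0$) is a simple path in $H$ with $2k+1$ edges whose two end nodes are unmatched in $M$ and whose edges alternate between non-$M$ and $M$ edges (first and last edges not in $M$).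 *)

(* Defs.v *)
From HB Require Import structures.
From mathcomp Require Import all_boot all_order all_algebra.
Set Implicit Arguments. Unset Strict Implicit. Unset Printing Implicit Defensive.
Import Order.TTheory GRing.Theory Num.Theory.

Definition simple_graph (V : finType) (E : rel V) : Prop :=
  symmetric E /\ irreflexive E.

Definition nbrs (V : finType) (E : rel V) (v : V) : {set V} := [set u | E u v].

(* friends of v: kappa(N_v) = { u in N_v : (u,v) in kappa(E) } *)
Definition friends (V : finType) (E kE : rel V) (v : V) : {set V} :=
  [set u in nbrs E v | kE u v].

(* kappa(G) = (V, kE) is an (eps, c)-kernel of G w.r.t. tight nodes T
   (slack nodes = complement of T). *)
Definition is_kernel (R : realFieldType) (V : finType) (E kE : rel V)
    (T : {set V}) (eps c : R) : Prop :=
  [/\ symmetric kE,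
      (forall u v, kE u v -> E u v),
      (forall v, (#|friends E kE v|%:R <= (1 + eps) * c)%R),
      (forall v, v \in T -> ((1 - eps) * c <= #|friends E kE v|%:R)%R)
    & (forall u v, u \in ~: T -> v \in ~: T -> E u v -> kE u v)].

Definition is_matching (V : finType) (H M : rel V) : Prop :=
  [/\ symmetric M,
      (forall u v, M u v -> H u v)
    & (forall u v w, M u v -> M u w -> v = w)].

Definition matched (V : finType) (M : rel V) (v : V) : bool := [exists u, M v u].

(* f 0, f 1, ..., f (2k+1) is an augmenting path of length 2k+1 in H w.r.t. M:
   simple, consecutive nodes adjacent in H, the i-th edge (f i, f i.+1)
   is in M iff i is odd (so first and last edges are non-M), endpoints unmatched. *)
Definition aug_path (V : finType) (H M : rel V) (k : nat) (f : nat -> V) : Prop :=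
  [/\ (forall i j, i <= 2 * k + 1 -> j <= 2 * k + 1 -> f i = f j -> i = j),
      (forall i, i < 2 * k + 1 -> H (f i) (f i.+1) /\ M (f i) (f i.+1) = odd i),
      ~~ matched M (f 0)
    & ~~ matched M (f (2 * k + 1))].

(* Main.v *)
Require Import Defs.
From HB Require Import structures.
From mathcomp Require Import all_boot all_order all_algebra.
Import Order.TTheory GRing.Theory Num.Theory.

Lemma unm_false (V : finType) (M : rel V) x y : ~~ matched M x -> M x y = false.
Proof. move=> nx; apply/negP => H; move/negP: nx; apply; apply/existsP; by exists y. Qed.

Theorem lemma3p13 (R : realFieldType) (V : finType) (E kE M : rel V)
    (T : {set V}) (eps c : R) :
  simple_graph E ->
  (1 <= c)%R -> (0 <= eps)%R -> (eps < 1 / 3)%R ->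
  is_kernel E kE T eps c ->
  is_matching kE M ->
  (forall (k : nat) (f : nat -> V), aug_path kE M k f -> 5 <= 2 * k + 1) ->
  forall u v, M u v ->
    let FT := [set w in T | ~~ matched M w] in
    (#|(friends E kE u :&: FT) :|: (friends E kE v :&: FT)|%:R <= (1 + eps) * c)%R.
Proof.
move=> [Esym Eirr] c1 e0 _ [kS kE_E kUB _ _] [MS M_kE _] noaug u v Muv; cbv zeta; set FT := [set w in T | _].
set A := friends E kE u :&: FT; set B := friends E kE v :&: FT.
have key : forall x y, x \in A -> y \in B -> x = y.
  move=> x y; rewrite !inE => /and3P[/andP[Exu kxu] _ ux] /and3P[/andP[Eyv kyv] _ uy].
  apply/eqP; apply/negP => nxy.
  have mu : matched M u by apply/existsP; exists v.
  have mv : matched M v by apply/existsP; exists u; rewrite MS.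
  have kuv : kE u v by apply: M_kE.
  have nuv : u != v by apply/eqP => e; move: (kE_E _ _ kuv); rewrite e Eirr.
  have nxu : x != u by apply/eqP => e; move: ux; rewrite e mu.
  have nxv : x != v by apply/eqP => e; move: ux; rewrite e mv.
  have nyu : y != u by apply/eqP => e; move: uy; rewrite e mu.
  have nyv : y != v by apply/eqP => e; move: uy; rewrite e mv.
  pose f := fun i : nat => match i with 0 => x | 1 => u | 2 => v | _ => y end.
  have : aug_path kE M 1 f.
    split => //=.
    - move=> i j hi hj; case: i hi => [|[|[|[|i]]]] // _; case: j hj => [|[|[|[|j]]]] //= _ e;
      rewrite ?e in nxu nxv nyu nyv nuv nxy; by rewrite ?eqxx in nxu nxv nyu nyv nuv nxy.
    - move=> i; case: i => [|[|[|i]]] //= _.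
      + by split => //; rewrite unm_false.
      + split; first by rewrite kS. apply/negP => H; by rewrite MS unm_false in H.
  by move/noaug.
case: (set_0Vmem A) => [A0|[x xA]].
  rewrite A0 set0U; apply: le_trans (kUB v); rewrite ler_nat; apply: subset_leq_card.
  by apply/subsetP => w; rewrite inE => /andP[].
case: (set_0Vmem B) => [B0|[y yB]].
  rewrite B0 setU0; apply: le_trans (kUB u); rewrite ler_nat; apply: subset_leq_card.
  by apply/subsetP => w; rewrite inE => /andP[].
have -> : A :|: B = [set x].
  apply/setP => w; rewrite in_setU in_set1; apply/orP/eqP.
  - by case=> h; [rewrite (key _ y h yB) (key _ _ xA yB) | rewrite -(key _ _ xA h)].
  - by move=> ->; left.
have c0 : (0 <= c)%R by apply: le_trans c1.
rewrite cards1; apply: (le_trans c1); rewrite -{1}[c]mul1r.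
by apply: ler_wpM2r; [exact: c0 | rewrite lerDl].
Qed.
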